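(* Let $n\geq 2$ and $m\geq 1$ be integers, let $K$ be an algebraically closed field, and let $p(x_1,\ldots,x_m)\in K\langle x_1,\ldots,x_m\rangle$ be a polynomial with zero constant term in non-commuting variables. Set $r=\mathrm{ord}(p)$ and suppose that $1<r<n-1$. Then $p(T_n(K))=\{p(u_1,\ldots,u_m): u_1,\ldots,u_m\in T_n(K)\}$ is a dense subset of $T_n(K)^{(r-1)}$ with respect to the Zariski topology.
   Context: $T_n(K)$ denotes the algebra of $n\times n$ upper triangular matrices over $K$. For an integer $t\geq 0$, $T_n(K)^{(t)}$ denotes the set of upper triangular matrices whose $(i,j)$ entries are zero whenever $j-i\leq t$; it is identified with the affine space $K^d$, $d=\frac{(n-r)(n-r+1)}{2}$ when $t=r-1$, via the entries $(i,j)$ with $j-i\geq t+1$, and carries the Zariski topology of that affine space (closed sets are common zero sets of families of commutative polynomials in these coordinates). For a $K$-algebra $\mathcal{A}$ let $\mathcal{T}(\mathcal{A})$ be the set of polynomial identities of $\mathcal{A}$; one has $\mathcal{T}(K)\supset\mathcal{T}(T_2(K))\supset\mathcal{T}(T_3(K))\supset\cdots$, with $T_1(K)=K$. The order $\mathrm{ord}(p)$ of $p$ is the least integer $k\geq 1$ such that $p\in\mathcal{T}(T_k(K))$ but $p\notin\mathcal{T}(T_{k+1}(K))$, and $\mathrm{ord}(p)=0$ if $p\notin\mathcal{T}(K)$. *)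

(* Defs.v *)
From HB Require Import structures.
From mathcomp Require Import all_boot all_order all_algebra.
From mathcomp Require Import mpoly.
Set Implicit Arguments. Unset Strict Implicit. Unset Printing Implicit Defensive.
Import GRing.Theory.
Local Open Scope ring_scope.

(* A polynomial in the free algebra K<x_1,...,x_m> (non-commuting variables,
   indexed by 'I_m), presented as a finite K-linear combination of words:
   the list [:: (c_1, w_1); ...; (c_k, w_k)] stands for \sum c_l w_l,
   where a word w is a sequence of variable indices. *)
Definition ncpoly (K : fieldType) (m : nat) := seq (K * seq 'I_m).

Definition nc_const_coef (K : fieldType) (m : nat) (p : ncpoly K m) : K :=
  \sum_(t <- p | t.2 == [::]) t.1.

Definition word_eval (K : fieldType) (m n : nat) (u : 'I_m -> 'M[K]_n)
  (w : seq 'I_m) : 'M[K]_n := foldr (fun i M => u i *m M) 1%:M w.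

Definition nc_eval (K : fieldType) (m n : nat) (p : ncpoly K m)
  (u : 'I_m -> 'M[K]_n) : 'M[K]_n :=
  \sum_(t <- p) t.1 *: word_eval u t.2.

Definition upper_tri (K : fieldType) (n : nat) (A : 'M[K]_n) : Prop :=
  forall i j : 'I_n, (j < i)%N -> A i j = 0.

(* T_n(K)^{(t)}: upper triangular, with A i j = 0 whenever j - i <= t
   (for j < i the integer j - i is negative, so the truncated nat test is
   also correct there). *)
Definition Tn_t (K : fieldType) (n t : nat) (A : 'M[K]_n) : Prop :=
  upper_tri A /\ forall i j : 'I_n, (j - i <= t)%N -> A i j = 0.

Definition is_PI_T (K : fieldType) (m : nat) (p : ncpoly K m) (k : nat) : Prop :=
  forall u : 'I_m -> 'M[K]_k, (forall i, upper_tri (u i)) -> nc_eval p u = 0.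

Definition nc_ord_is (K : fieldType) (m : nat) (p : ncpoly K m) (r : nat) : Prop :=
  (r = 0%N /\ ~ is_PI_T p 1)
  \/ [/\ (1 <= r)%N, is_PI_T p r, ~ is_PI_T p r.+1 &
        forall k, (1 <= k < r)%N -> ~ (is_PI_T p k /\ ~ is_PI_T p k.+1)].

(* Coordinates (i,j) with j - i >= t+1, identifying T_n(K)^{(t)} with K^d. *)
Definition coordset (n t : nat) : {set 'I_n * 'I_n} :=
  [set ij : 'I_n * 'I_n | (t.+1 <= nat_of_ord ij.2 - nat_of_ord ij.1)%N].

Definition coords (K : fieldType) (n t : nat) (A : 'M[K]_n) :
  'I_#|coordset n t| -> K :=
  fun k => A (enum_val k).1 (enum_val k).2.

(* Main.v *)
Require Import Defs.
From HB Require Import structures.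
From mathcomp Require Import all_boot all_order all_algebra.
From mathcomp Require Import mpoly.
From mathcomp Require Import zify.
From Stdlib Require Import Classical.
Import GRing.Theory.
Local Open Scope ring_scope.
Set Implicit Arguments. Unset Strict Implicit. Unset Printing Implicit Defensive.

Definition upR (R : pzRingType) n (A : 'M[R]_n) : Prop :=
  forall i j : 'I_n, (j < i)%N -> A i j = 0.

Definition wevalR (R : pzRingType) m n (u : 'I_m -> 'M[R]_n) (w : seq 'I_m) : 'M[R]_n :=
  foldr (fun i M => u i *m M) 1%:M w.

Definition ncevalR (K R : pzRingType) m n (f : K -> R) (p : seq (K * seq 'I_m))
  (u : 'I_m -> 'M[R]_n) : 'M[R]_n := \sum_(t <- p) f t.1 *: wevalR u t.2.

Lemma nc_evalE (K : fieldType) m n (p : ncpoly K m) (u : 'I_m -> 'M[K]_n) :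
  nc_eval p u = ncevalR id p u.
Proof. by []. Qed.

Lemma upper_triE (K : fieldType) n (A : 'M[K]_n) : upper_tri A <-> upR A.
Proof. by []. Qed.

Section Upper.
Variables (R : pzRingType) (n : nat).

Lemma upR_mul (A B : 'M[R]_n) : upR A -> upR B -> upR (A *m B).
Proof.
move=> hA hB i j lt_ji; rewrite mxE big1 // => k _.
case: (ltnP k i) => [lt_ki|le_ik]; first by rewrite hA // mul0r.
by rewrite hB ?mulr0 // (leq_trans lt_ji le_ik).
Qed.

Lemma upR_1 : upR (1%:M : 'M[R]_n).
Proof.
move=> i j lt_ji; rewrite mxE; case: eqP => [eij|//].
by rewrite eij ltnn in lt_ji.
Qed.

Lemma upR_add (A B : 'M[R]_n) : upR A -> upR B -> upR (A + B).
Proof. by move=> hA hB i j h; rewrite mxE hA ?hB ?addr0. Qed.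

Lemma upR_scale c (A : 'M[R]_n) : upR A -> upR (c *: A).
Proof. by move=> hA i j h; rewrite mxE hA ?mulr0. Qed.

Lemma upR_0 : upR (0 : 'M[R]_n).
Proof. by move=> i j h; rewrite mxE. Qed.

Lemma upR_weval m (u : 'I_m -> 'M[R]_n) w : (forall k, upR (u k)) -> upR (wevalR u w).
Proof. by move=> hu; elim: w => [|a w IH] /=; [apply: upR_1 | apply: upR_mul]. Qed.

Lemma upR_nceval (K : pzRingType) m (f : K -> R) p (u : 'I_m -> 'M[R]_n) :
  (forall k, upR (u k)) -> upR (ncevalR f p u).
Proof.
move=> hu; rewrite /ncevalR; elim: p => [|t p IH]; first by rewrite big_nil; apply: upR_0.
by rewrite big_cons; apply: upR_add => //; apply: upR_scale; apply: upR_weval.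
Qed.

End Upper.

Lemma shift_ord_proof n s i (H : (i + s <= n)%N) (a : 'I_s) : (i + a < n)%N.
Proof. by apply: leq_trans H; rewrite ltn_add2l. Qed.

Definition shift_ord n s i (H : (i + s <= n)%N) (a : 'I_s) : 'I_n :=
  Ordinal (shift_ord_proof H a).

Definition win (R : pzRingType) n s i (H : (i + s <= n)%N) (A : 'M[R]_n) : 'M[R]_s :=
  \matrix_(a, b) A (shift_ord H a) (shift_ord H b).

Section Window.
Variables (R : pzRingType) (n s i : nat) (H : (i + s <= n)%N).

Lemma win_mul (A B : 'M[R]_n) : upR A -> upR B ->
  win H (A *m B) = win H A *m win H B.
Proof.
move=> hA hB; apply/matrixP => a b; rewrite !mxE.
case: s H a b => [|s'] H' a b; first by case: a.
rewrite (bigID (fun k : 'I_n => (i <= k < i + s'.+1)%N)) /=.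
rewrite [X in _ + X]big1 ?addr0; last first.
  move=> k /negbTE; case: (ltnP k i) => [lt_ki _|le_ik /= lt].
    by rewrite hA ?mul0r // (leq_trans lt_ki) // leq_addr.
  move: lt => /negbT; rewrite -leqNgt => le.
  by rewrite hB ?mulr0 //= (leq_trans _ le) // ltn_add2l.
rewrite (reindex_onto (shift_ord H') (fun k : 'I_n => (inord (k - i) : 'I_s'.+1))) /=; last first.
  move=> k /andP[le_ik lt_k]; apply/val_inj => /=; rewrite inordK ?subnKC //.
  by rewrite ltn_subLR.
apply: eq_big => [c|c _]; last by rewrite !mxE.
rewrite leq_addr /= ltn_add2l ltn_ord /=; apply/eqP/val_inj => /=.
by rewrite addKn inordK.
Qed.

Lemma win_1 : win H (1%:M : 'M[R]_n) = 1%:M.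
Proof.
apply/matrixP => a b; rewrite !mxE; congr ((_ : bool)%:R).
by apply/eqP/eqP => [/(congr1 val)/= /addnI /val_inj|->].
Qed.

Lemma win_add (A B : 'M[R]_n) : win H (A + B) = win H A + win H B.
Proof. by apply/matrixP => a b; rewrite !mxE. Qed.

Lemma win_scale c (A : 'M[R]_n) : win H (c *: A) = c *: win H A.
Proof. by apply/matrixP => a b; rewrite !mxE. Qed.

Lemma win_0 : win H (0 : 'M[R]_n) = 0.
Proof. by apply/matrixP => a b; rewrite !mxE. Qed.

Lemma win_weval m (u : 'I_m -> 'M[R]_n) w : (forall k, upR (u k)) ->
  win H (wevalR u w) = wevalR (fun k => win H (u k)) w.
Proof.
move=> hu; elim: w => [|a w IH] /=; first exact: win_1.
by rewrite win_mul ?IH //; apply: upR_weval.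
Qed.

Lemma win_nceval (K : pzRingType) m (f : K -> R) p (u : 'I_m -> 'M[R]_n) :
  (forall k, upR (u k)) ->
  win H (ncevalR f p u) = ncevalR f p (fun k => win H (u k)).
Proof.
move=> hu; rewrite /ncevalR; elim: p => [|t p IH]; first by rewrite !big_nil win_0.
by rewrite !big_cons win_add win_scale win_weval // IH.
Qed.

End Window.

Definition emb (R : pzRingType) n s i (w : 'M[R]_s) : 'M[R]_n :=
  \matrix_(a, b) if ((i <= a) && (i <= b))%N then
     match (insub (a - i)%N : option 'I_s), (insub (b - i)%N : option 'I_s) with
     | Some a', Some b' => w a' b'
     | _, _ => 0 end
  else 0.

Lemma win_emb (R : pzRingType) n s i (H : (i + s <= n)%N) (w : 'M[R]_s) :
  win H (emb n i w) = w.
Proof.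
apply/matrixP => a b; rewrite !mxE /= !leq_addr /= !addKn.
by rewrite !valK.
Qed.

Lemma upR_emb (R : pzRingType) n s i (w : 'M[R]_s) : upR w -> upR (emb n i w).
Proof.
move=> hw a b lt_ba; rewrite mxE.
case: ifP => // /andP[ia ib].
case: (insubP 'I_s (a - i)%N) => [a' _ Ha'|_]; case: (insubP 'I_s (b - i)%N) => [b' _ Hb'|_] //.
by apply: hw; rewrite Ha' Hb' ltn_sub2r // (leq_trans _ lt_ba) // ltnS.
Qed.

Lemma weval_ext (R : pzRingType) m n (u u' : 'I_m -> 'M[R]_n) w :
  (forall k, u k = u' k) -> wevalR u w = wevalR u' w.
Proof. by move=> e; elim: w => [|a w IH] //=; rewrite IH e. Qed.

Lemma nceval_ext (K R : pzRingType) m n (f f' : K -> R) p (u u' : 'I_m -> 'M[R]_n) :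
  (forall c, f c = f' c) -> (forall k, u k = u' k) -> ncevalR f p u = ncevalR f' p u'.
Proof.
move=> ef eu; rewrite /ncevalR; apply: eq_bigr => t _.
by rewrite ef (weval_ext _ eu).
Qed.

Lemma PI_mono (K : fieldType) m (p : ncpoly K m) r s :
  is_PI_T p r -> (s <= r)%N -> is_PI_T p s.
Proof.
move=> hP le_sr w hw.
have H : (0 + s <= r)%N by [].
rewrite nc_evalE (@nceval_ext _ _ _ _ id id p w (fun k => win H (emb r 0 (w k)))) //;
  last by move=> k; rewrite win_emb.
rewrite -win_nceval; last by move=> k; apply: upR_emb; apply: hw.
rewrite -nc_evalE hP ?win_0 // => k; apply: upR_emb; apply: hw.
Qed.

Lemma part1 (K : fieldType) m n (p : ncpoly K m) r (u : 'I_m -> 'M[K]_n) :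
  (1 <= r)%N -> is_PI_T p r -> (forall k, upper_tri (u k)) ->
  Tn_t r.-1 (nc_eval p u).
Proof.
move=> r1 hP hu.
have hup : upR (nc_eval p u) by rewrite nc_evalE; apply: upR_nceval.
split; first exact: hup.
move=> a b hab; case: (ltnP b a) => [lt_ba|le_ab]; first exact: hup.
have H : (a + (b - a).+1 <= n)%N by rewrite addnS subnKC.
have -> : nc_eval p u a b = (win H (nc_eval p u)) ord0 (inord (b - a)).
  rewrite mxE; congr (nc_eval p u _ _); apply/val_inj => //=.
    by rewrite addn0.
  by rewrite inordK ?subnKC // ltnS.
rewrite nc_evalE win_nceval // -nc_evalE.
have hs : ((b - a).+1 <= r)%N by rewrite -(prednK r1) ltnS.
have hw : forall k, upper_tri (win H (u k)).
  move=> k x y lt_yx; rewrite mxE; apply: hu => /=; by rewrite ltn_add2l.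
by rewrite (PI_mono hP hs hw) mxE.
Qed.

Lemma map_weval (R S : pzRingType) m n (phi : {rmorphism R -> S})
  (u : 'I_m -> 'M[R]_n) (u' : 'I_m -> 'M[S]_n) w :
  (forall k, map_mx phi (u k) = u' k) -> map_mx phi (wevalR u w) = wevalR u' w.
Proof.
move=> eu; elim: w => [|a w IH] /=; first exact: map_mx1.
by rewrite map_mxM IH eu.
Qed.

Lemma map_nceval (K R S : pzRingType) m n (phi : {rmorphism R -> S})
  (f : K -> R) (g : K -> S) p (u : 'I_m -> 'M[R]_n) (u' : 'I_m -> 'M[S]_n) :
  (forall c, phi (f c) = g c) -> (forall k, map_mx phi (u k) = u' k) ->
  map_mx phi (ncevalR f p u) = ncevalR g p u'.
Proof.
move=> ef eu; rewrite /ncevalR; elim: p => [|t p IH]; first by rewrite !big_nil map_mx0.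
by rewrite !big_cons map_mxD map_mxZ IH ef (map_weval _ eu).
Qed.

Lemma emb_val (K : fieldType) m n (p : ncpoly K m) r (v : 'I_m -> 'M[K]_r.+1) i
  (a b : 'I_n) : (forall k, upper_tri (v k)) -> (i + r.+1 <= n)%N ->
  val a = i -> val b = (i + r)%N ->
  nc_eval p (fun j => emb n i (v j)) a b = nc_eval p v ord0 ord_max.
Proof.
move=> hv H ea eb.
have -> : nc_eval p (fun j => emb n i (v j)) a b =
   win H (nc_eval p (fun j => emb n i (v j))) ord0 ord_max.
  by rewrite mxE; congr (nc_eval _ _ _ _); apply/val_inj; rewrite /= ?addn0.
rewrite nc_evalE win_nceval; last by move=> k; apply: upR_emb; apply: hv.
have E : ncevalR id p (fun k => win H (emb n i (v k))) = ncevalR id p v.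
  by apply: nceval_ext => // k; rewrite win_emb.
by rewrite nc_evalE E.
Qed.

Lemma line_poly (K : fieldType) m n (p : ncpoly K m) (u U : 'I_m -> 'M[K]_n) (t : K) (a b : 'I_n) :
  ((ncevalR (@polyC K) p
     (fun j => \matrix_(x, y) ((u j x y)%:P + 'X * (U j x y - u j x y)%:P))) a b).[t]
  = nc_eval p (fun j => \matrix_(x, y) (u j x y + t * (U j x y - u j x y))) a b.
Proof.
have E : map_mx (horner_eval t) (ncevalR (@polyC K) p
     (fun j => \matrix_(x, y) ((u j x y)%:P + 'X * (U j x y - u j x y)%:P)))
   = ncevalR id p (fun j => \matrix_(x, y) (u j x y + t * (U j x y - u j x y))).
  apply: map_nceval => [c|k] /=; first by rewrite horner_evalE hornerC.
  apply/matrixP => x y; rewrite !mxE horner_evalE.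
  by rewrite hornerD hornerM hornerX !hornerC.
by move: (congr1 (fun M : 'M[K]_n => M a b) E); rewrite mxE horner_evalE.
Qed.

Lemma good_v (K : fieldType) m (p : ncpoly K m) r : (1 <= r)%N -> is_PI_T p r ->
  ~ is_PI_T p r.+1 ->
  exists v : 'I_m -> 'M[K]_r.+1, (forall k, upper_tri (v k)) /\ nc_eval p v ord0 ord_max != 0.
Proof.
move=> r1 hP hN; apply: NNPP => hne; apply: hN => v hv.
apply/matrixP => a b; rewrite mxE.
have [/andP[/eqP a0 /eqP br]|hab] := boolP (((a : nat) == 0%N) && ((b : nat) == r)).
  have -> : a = ord0 by apply/val_inj.
  have -> : b = ord_max by apply/val_inj.
  apply/eqP; apply: contraT => hnz; exfalso; apply: hne; exists v; split => //.
have [_ hz] := part1 r1 hP hv.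
apply: hz; move: hab (ltn_ord a) (ltn_ord b) r1; lia.
Qed.

Lemma good_u (K : closedFieldType) m n (p : ncpoly K m) r (v : 'I_m -> 'M[K]_r.+1) :
  (forall k, upper_tri (v k)) -> nc_eval p v ord0 ord_max != 0 ->
  exists u : 'I_m -> 'M[K]_n, (forall k, upper_tri (u k)) /\
    forall a b : 'I_n, (b : nat) = (a + r)%N -> nc_eval p u a b != 0.
Proof.
move=> hv hnz.
suff H : forall k, exists u : 'I_m -> 'M[K]_n, (forall j, upper_tri (u j)) /\
    forall a b : 'I_n, (b : nat) = (a + r)%N -> (a < k)%N -> nc_eval p u a b != 0.
  have [u [hu hab]] := H n; exists u; split => // a b e; exact: hab.
elim=> [|k [u [hu IH]]].
  exists (fun _ => 0); split => // j x y _; by rewrite mxE.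
case: (ltnP (k + r) n) => [hk|hk]; last first.
  exists u; split => // a b e lt; rewrite ltnS leq_eqVlt in lt.
  case/orP: lt => [/eqP ak|]; last exact: IH.
  by exfalso; move: (ltn_ord b) e ak hk; lia.
pose U := fun j => emb n k (v j).
pose l := fun (t : K) j => \matrix_(x, y) (u j x y + t * (U j x y - u j x y)) : 'M[K]_n.
pose L := fun j => \matrix_(x, y) ((u j x y)%:P + 'X * (U j x y - u j x y)%:P) : 'M[{poly K}]_n.
pose P := fun (a b : 'I_n) => (ncevalR (@polyC K) p L) a b.
have eP : forall a b t, (P a b).[t] = nc_eval p (l t) a b.
  by move=> a b t; exact: line_poly.
have hU : forall j, upper_tri (U j) by move=> j; apply: upR_emb; apply: hv.
have l0 : forall a b, nc_eval p (l 0) a b = nc_eval p u a b.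
  move=> a b; rewrite !nc_evalE (@nceval_ext _ _ _ _ id id p (l 0) u) // => j.
  by apply/matrixP => x y; rewrite mxE mul0r addr0.
have l1 : forall a b, nc_eval p (l 1) a b = nc_eval p U a b.
  move=> a b; rewrite !nc_evalE (@nceval_ext _ _ _ _ id id p (l 1) U) // => j.
  by apply/matrixP => x y; rewrite mxE mul1r addrC subrK.
pose Pi := \prod_(ab : 'I_n * 'I_n | ((ab.2 : nat) == ab.1 + r)%N && (ab.1 <= k)%N) P ab.1 ab.2.
have hPi : Pi != 0.
  apply/prodf_neq0 => [[a b]] /= /andP[/eqP e le].
  rewrite leq_eqVlt in le; case/orP: le => [/eqP ak|lt].
    apply/negP => /eqP P0; move: (eP a b 1); rewrite P0 horner0 l1 => /esym/eqP.
    have E1 : nc_eval p U a b = nc_eval p v ord0 ord_max.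
      by apply: emb_val => //=; [rewrite addnS | rewrite -ak].

    by rewrite E1 (negbTE hnz).
  apply/negP => /eqP P0; move: (eP a b 0); rewrite P0 horner0 l0 => /esym/eqP.
  by rewrite (negbTE (IH a b e lt)).
have /closed_nonrootP [t ht] := hPi.
exists (l t); split.
  move=> j x y lt; rewrite mxE hu // hU // subrr mulr0 addr0 //.
move=> a b e lt; rewrite -eP.
move: ht; rewrite /root /Pi horner_prod => /prodf_neq0 /(_ (a, b)) /=.
by rewrite e eqxx /= -ltnS lt => /(_ isT).
Qed.



Section Conj.
Variables (K : fieldType) (n' r : nat).
Local Notation N := n'.+1.
Hypothesis r1 : (1 <= r)%N.
Variable M : 'M[K]_N.
Hypothesis M0 : forall a b : 'I_N, (b < a + r)%N -> M a b = 0.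
Hypothesis Mnz : forall a b : 'I_N, (b : nat) = (a + r)%N -> M a b != 0.

Lemma powM_zero t (a b : 'I_N) : (b < a + t * r)%N -> (M ^+ t) a b = 0.
Proof.
elim: t a b => [|t IH] a b.
  rewrite mul0n addn0 expr0 mxE => lt; case: eqP => // eab.
  by rewrite eab ltnn in lt.
move=> lt; rewrite exprSr -mulmxE mxE big1 // => c _.
case: (ltnP c (a + t * r)) => [ltc|lec]; first by rewrite IH ?mul0r.
by rewrite M0 ?mulr0 //; move: lt lec; rewrite mulSn; lia.
Qed.

Lemma powM_nz t (a b : 'I_N) : (b : nat) = (a + t * r)%N -> (M ^+ t) a b != 0.
Proof.
elim: t a b => [|t IH] a b.
  by rewrite mul0n addn0 expr0 mxE => eab; rewrite (_ : a = b) ?eqxx ?oner_eq0 //; apply/val_inj.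
move=> e; rewrite exprSr -mulmxE mxE.
have hc : (a + t * r < N)%N by move: (ltn_ord b) e; rewrite mulSn; lia.
pose c0 : 'I_N := Ordinal hc.
rewrite (bigD1 c0) //= big1 ?addr0; last first.
  move=> c /eqP hne.
  case: (ltnP c (a + t * r)) => [ltc|lec]; first by rewrite powM_zero ?mul0r.
  have gt : (a + t * r < c)%N.
    rewrite ltn_neqAle lec andbT; apply/eqP => ec; apply: hne; exact/val_inj.
  by rewrite M0 ?mulr0 //; move: e gt; rewrite mulSn; lia.
apply: mulf_neq0; first exact: IH.
by apply: Mnz => /=; rewrite e mulSn; lia.
Qed.

Definition kk (b : nat) := ((n' - b) %/ r)%N.

Lemma kk_bound (b : 'I_N) : (b + kk b * r < N)%N.
Proof.
rewrite ltnS /kk; have := leq_divM (n' - b) r; have := ltn_ord b; lia.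
Qed.

Definition gM : 'M[K]_N := \matrix_(a, b) (M ^+ kk b) a (Ordinal (kk_bound b)).

Lemma gM_up : upR gM.
Proof. by move=> a b lt; rewrite mxE powM_zero //= ltn_add2r. Qed.

Lemma gM_diag (a : 'I_N) : gM a a != 0.
Proof. by rewrite mxE powM_nz. Qed.

Definition A0 : 'M[K]_N := \matrix_(a, b) (((b : nat) == a + r)%N)%:R.

Lemma gM_inter : M * gM = gM * A0.
Proof.
apply/matrixP => a b; rewrite -!mulmxE !mxE.
have -> : \sum_j M a j * gM j b = (M *m M ^+ kk b) a (Ordinal (kk_bound b)).
  by rewrite mxE; apply: eq_bigr => j _; rewrite mxE.
rewrite mulmxE -exprS.
case: (ltnP b r) => [ltbr|lerb].
  rewrite big1; first by rewrite powM_zero //= mulSn; lia.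
  move=> c _; rewrite [A0 _ _]mxE; case: eqP => [e|]; last by rewrite mulr0.
  by exfalso; move: e ltbr; lia.
have hc : (b - r < N)%N by move: (ltn_ord b); lia.
pose c0 : 'I_N := Ordinal hc.
rewrite (bigD1 c0) //= big1 ?addr0; last first.
  move=> c /eqP hne; rewrite [A0 _ _]mxE; case: eqP => [e|]; last by rewrite mulr0.
  by exfalso; apply: hne; apply/val_inj => /=; move: e lerb; lia.
rewrite !mxE /= (_ : b == b - r + r :> nat)%N ?mulr1; last by apply/eqP; lia.
have ek : kk c0 = (kk b).+1.
  rewrite /kk /= (_ : n' - (b - r) = n' - b + r)%N; last by move: (ltn_ord b) lerb; lia.
  by rewrite divnDr ?dvdnn // divnn -(prednK r1) addn1.
congr ((M ^+ _) a _) => //; apply/val_inj => /=; rewrite ek mulSn.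
by move: lerb; lia.
Qed.

Lemma gM_unit : gM \is a GRing.unit.
Proof.
rewrite -[gM]trmxK unitmxE det_tr det_trig; last first.
  by apply/is_trig_mxP => i j lt; rewrite mxE gM_up.
rewrite unitfE; apply/prodf_neq0 => i _; rewrite mxE; exact: gM_diag.
Qed.

End Conj.

Lemma upR_scalar (R : pzRingType) n (c : R) : upR (c%:M : 'M[R]_n).
Proof.
move=> i j lt; rewrite mxE; case: eqP => [e|//]; by rewrite e ltnn in lt.
Qed.

Lemma upR_inv (K : fieldType) n' (g : 'M[K]_n'.+1) :
  upR g -> g \is a GRing.unit -> upR g^-1.
Proof.
move=> hg ug.
have hpoly : forall q : {poly K}, upR (horner_mx g q).
  elim/poly_ind => [|q c IH]; first by rewrite rmorph0; apply: upR_0.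
  rewrite rmorphD rmorphM /= horner_mx_X horner_mx_C.
  by apply: upR_add; [rewrite -mulmxE; apply: upR_mul | apply: upR_scalar].
set P := char_poly g.
have CH := Cayley_Hamilton g; rewrite -/P in CH.
have hP := poly_take_drop 1 P.
have eT : take_poly 1 P = (P`_0)%:P.
  by apply/polyP => i; rewrite coef_take_poly coefC; case: i.
rewrite eT in hP.
set Q := drop_poly 1 P in hP.
have E : horner_mx g Q * g = - (P`_0)%:M.
  have e2 : horner_mx g P = horner_mx g Q * g + (P`_0)%:M.
    by rewrite -[in LHS]hP rmorphD rmorphM /= horner_mx_C expr1 horner_mx_X addrC.
  by apply/eqP; rewrite -addr_eq0 -e2 CH.
have cu : P`_0 != 0.
  rewrite /P char_poly_det mulf_neq0 ?signr_eq0 //.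
  by rewrite -unitfE -unitmxE.
have E2 : (- (P`_0)^-1 *: horner_mx g Q) * g = 1.
  by rewrite -scalerAl E scalerN scaleNr opprK -scalemx1 scalerA mulVf // scale1r.
have -> : g^-1 = - (P`_0)^-1 *: horner_mx g Q.
  by rewrite -[RHS](mulrK ug) E2 mul1r.
by apply: upR_scale.
Qed.



Lemma conj_weval (K : fieldType) n' m (h : 'M[K]_n'.+1) (u : 'I_m -> 'M[K]_n'.+1) w :
  h \is a GRing.unit ->
  wevalR (fun k => h * u k * h^-1) w = h * wevalR u w * h^-1.
Proof.
move=> hu; elim: w => [|a w IH] /=; first by rewrite mulr1 mulrV.
rewrite IH !mulmxE !mulrA; congr (_ * _); rewrite -!mulrA; congr (_ * (_ * _)).
by rewrite mulKr.
Qed.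

Lemma conj_nceval (K : fieldType) n' m (p : ncpoly K m) (h : 'M[K]_n'.+1)
  (u : 'I_m -> 'M[K]_n'.+1) : h \is a GRing.unit ->
  nc_eval p (fun k => h * u k * h^-1) = h * nc_eval p u * h^-1.
Proof.
move=> hu; rewrite !nc_evalE /ncevalR; elim: p => [|t p IH].
  by rewrite !big_nil mulr0 mul0r.
rewrite !big_cons IH conj_weval // mulrDr mulrDl; congr (_ + _).
by rewrite scalerAl scalerAr.
Qed.

Lemma mmap_horner (K : fieldType) d (h : 'I_d -> {poly K}) (q : {mpoly K[d]}) t :
  (mmap (@polyC K) h q).[t] = q.@[fun k => (h k).[t]].
Proof.
rewrite /mmap horner_sum mevalE; apply: eq_bigr => mm _.
rewrite hornerCM /mmap1 horner_prod; congr (_ * _); apply: eq_bigr => i _.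
by rewrite horner_exp.
Qed.

Lemma poly_zero_out (K : closedFieldType) (P : {poly K}) (s : seq K) :
  (forall t, t \notin s -> P.[t] = 0) -> P = 0.
Proof.
move=> hP; pose Pi := \prod_(a <- s) ('X - a%:P).
have hPi : Pi != 0 by apply: monic_neq0; apply: monic_prod_XsubC.
have : P * Pi == 0.
  apply: contraT => /closed_nonrootP [t]; rewrite /root hornerM.
  have [ts|tns] := boolP (t \in s).
    by move: ts; rewrite -root_prod_XsubC /root => /eqP ->; rewrite mulr0 eqxx.
  by rewrite hP // mul0r eqxx.
by rewrite mulf_eq0 (negbTE hPi) orbF => /eqP.
Qed.

Section Key.
Variables (K : fieldType) (n' m r : nat) (p : ncpoly K m).
Local Notation N := n'.+1.
Hypothesis r1 : (1 <= r)%N.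
Variable u0 : 'I_m -> 'M[K]_N.
Hypothesis hu0 : forall k, upper_tri (u0 k).
Hypothesis hA10 : forall a b : 'I_N, (b < a + r)%N -> nc_eval p u0 a b = 0.
Hypothesis hA1nz : forall a b : 'I_N, (b : nat) = (a + r)%N -> nc_eval p u0 a b != 0.

Lemma key (M : 'M[K]_N) :
  (forall a b : 'I_N, (b < a + r)%N -> M a b = 0) ->
  (forall a b : 'I_N, (b : nat) = (a + r)%N -> M a b != 0) ->
  exists u : 'I_m -> 'M[K]_N, (forall k, upper_tri (u k)) /\ nc_eval p u = M.
Proof.
move=> M0 Mnz.
set A1 := nc_eval p u0.
set g := gM r1 M; set g1 := gM r1 A1.
have ug : g \is a GRing.unit by apply: (gM_unit r1 M0 Mnz).
have ug1 : g1 \is a GRing.unit by apply: (gM_unit r1 hA10 hA1nz).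
have ig := gM_inter r1 M0; have ig1 := gM_inter r1 hA10.
rewrite -/g in ig; rewrite -/g1 -/A1 in ig1.
set h := g * g1^-1.
have uh : h \is a GRing.unit by rewrite /h unitrMr ?unitrV.
have hup : upR h.
  rewrite /h -mulmxE; apply: upR_mul; first exact: gM_up.
  by apply: upR_inv => //; apply: gM_up.
have hiup : upR h^-1.
  rewrite /h invrM ?unitrV // invrK -mulmxE; apply: upR_mul; last first.
    by apply: upR_inv => //; apply: gM_up.
  exact: gM_up.
exists (fun k => h * u0 k * h^-1); split.
  move=> k; rewrite -!mulmxE; apply: upR_mul => //; apply: upR_mul => //; apply: hu0.
rewrite (conj_nceval p u0 uh) -/A1 /h.
have e1 : g1^-1 * A1 * g1 = A0 K n' r by rewrite -mulrA ig1 mulKr.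
rewrite invrM ?unitrV // invrK.
have -> : g * g1^-1 * A1 * (g1 * g^-1) = g * (g1^-1 * A1 * g1) * g^-1.
  by rewrite !mulrA.
by rewrite e1 -ig mulrK.
Qed.

End Key.


Unset Implicit Arguments.
Set Strict Implicit.

Theorem theorem1p5 (K : closedFieldType) (n m : nat) (p : ncpoly K m) (r : nat) :
  (2 <= n)%N -> (1 <= m)%N ->
  nc_const_coef p = 0 ->
  nc_ord_is p r ->
  (1 < r)%N -> (r < n.-1)%N ->
  (forall u : 'I_m -> 'M[K]_n, (forall i, upper_tri (u i)) ->
     @Tn_t K n (r.-1) (nc_eval p u))
  /\
  (forall q : {mpoly K[#|coordset n r.-1|]},
     (forall u : 'I_m -> 'M[K]_n, (forall i, upper_tri (u i)) ->
        q.@[@coords K n (r.-1) (nc_eval p u)] = 0) ->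
     forall A : 'M[K]_n, @Tn_t K n (r.-1) A -> q.@[@coords K n (r.-1) A] = 0).
Proof.
move=> n2 m1 _ hord r1' rlt.
have r1 : (1 <= r)%N by apply: ltnW.
have [hP hN] : is_PI_T p r /\ ~ is_PI_T p r.+1.
  by case: hord => [[r0 _]|[_ hP hN _]]; [rewrite r0 in r1' | split].
split; first by move=> u hu; apply: part1.
case: n n2 rlt => [//|n'] n2 rlt q Hq A _.
have [v [hv hvnz]] := good_v r1 hP hN.
have [u0 [hu0 hu0nz]] := @good_u K m n'.+1 p r v hv hvnz.
have hA10 : forall a b : 'I_n'.+1, (b < a + r)%N -> nc_eval p u0 a b = 0.
  move=> a b lt; have [_ hz] := part1 r1 hP hu0; apply: hz; lia.
set d := #|coordset n'.+1 r.-1|.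
have w0 : ((ord0 : 'I_n'.+1), (ord_max : 'I_n'.+1)) \in coordset n'.+1 r.-1.
  by rewrite inE /=; move: rlt r1; lia.
pose Mof (y : 'I_d -> K) : 'M[K]_n'.+1 := \matrix_(a, b)
  if (a, b) \in coordset n'.+1 r.-1 then y (enum_rank_in w0 (a, b)) else 0.
have coordsM : forall y k, coords (Mof y) k = y k.
  move=> y k; rewrite /coords mxE -surjective_pairing (enum_valP k).
  by rewrite enum_valK_in.
pose S (k : 'I_d) := ((enum_val k).2 : nat) == ((enum_val k).1 + r)%N.
have hgood : forall y, (forall k, S k -> y k != 0) -> q.@[y] = 0.
  move=> y hy.
  have M0 : forall a b : 'I_n'.+1, (b < a + r)%N -> Mof y a b = 0.
    move=> a b lt; rewrite mxE; case: ifP => //; rewrite inE /=; move: lt r1; lia.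
  have Mnz : forall a b : 'I_n'.+1, (b : nat) = (a + r)%N -> Mof y a b != 0.
    move=> a b e; rewrite mxE.
    have hin : (a, b) \in coordset n'.+1 r.-1 by rewrite inE /= e; move: r1; lia.
    by rewrite hin; apply: hy; rewrite /S enum_rankK_in //= e.
  have [u [hu eu]] := @key K n' m r p r1 u0 hu0 hA10 hu0nz (Mof y) M0 Mnz.
  have -> : q.@[y] = q.@[coords (Mof y)] by apply: meval_eq => k; rewrite coordsM.
  by rewrite -eu; apply: Hq.
set x := coords A.
pose e (k : 'I_d) : K := (S k)%:R.
pose phi := mmap (@polyC K) (fun k => (x k)%:P + (e k)%:P * 'X) q.
have ephi : forall t, phi.[t] = q.@[fun k => x k + e k * t].
  move=> t; rewrite mmap_horner; apply: meval_eq => k.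
  by rewrite hornerD hornerM hornerX !hornerC.
have phi0 : phi = 0.
  apply: (@poly_zero_out _ _ [seq - x k | k <- enum 'I_d]) => t ht.
  rewrite ephi; apply: hgood => k Sk; rewrite /e Sk mul1r.
  apply: contra ht => ex; apply/mapP; exists k; first by rewrite mem_enum.
  by apply/eqP; rewrite -addr_eq0 addrC.
have := ephi 0; rewrite phi0 horner0 => /esym.
have -> : q.@[fun k => x k + e k * 0] = q.@[x] by apply: meval_eq => k; rewrite mulr0 addr0.
done.
Qed.
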